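(* Let $R$ be an associative ring with identity and $a,b,c,d\in R$ such that both $a^{\|(b,c)}$ and $d^{\|(b,c)}$ exist. Let $b^{-}$, $c^{-}$ be any (fixed) inner inverses of $b$, $c$, and put $e=bb^{-}$, $f=c^{-}c$. Then $a^{\|(b,c)}de+1-e$ and $fda^{\|(b,c)}+1-f$ are invertible and $(a^{\|(b,c)}de+1-e)^{-1}=d^{\|(b,c)}ae+1-e$ and $(fda^{\|(b,c)}+1-f)^{-1}=fad^{\|(b,c)}+1-f$.
   Context: For $a,b,c\in R$, $a$ is $(b,c)$-invertible if there exists $y\in R$ with $y\in (bRy)\cap(yRc)$, $yab=b$ and $cay=c$; such $y$ is unique and denoted $a^{\|(b,c)}$. An inner inverse of $x$ is an element $x^{-}$ with $xx^{-}x=x$. *)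

(* Defs.v *)
From HB Require Import structures.
From mathcomp Require Import all_boot all_order all_algebra.
Set Implicit Arguments. Unset Strict Implicit. Unset Printing Implicit Defensive.
Import GRing.Theory.
Local Open Scope ring_scope.

Definition is_bc_inverse (R : pzRingType) (a b c y : R) : Prop :=
  [/\ (exists r : R, y = b * r * y),
      (exists s : R, y = y * s * c),
      y * a * b = b
    & c * a * y = c].

Definition is_inner_inverse (R : pzRingType) (x xm : R) : Prop := x * xm * x = x.

(* Main.v *)
Require Import Defs.
From HB Require Import structures.
From mathcomp Require Import all_boot all_order all_algebra.
Import GRing.Theory.
Local Open Scope ring_scope.

Lemma L1 (R : pzRingType) (e x w : R) : e * e = e -> e * w = w ->
  x * e * w * e = e -> (x * e + 1 - e) * (w * e + 1 - e) = 1.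
Proof.
move=> ee ew h.
rewrite -!addrA !mulrDl !mulrDr !mulrN !mulNr !mulr1 !mul1r.
rewrite !mulrA h -(mulrA x e e) ee ew !subrr ?opprK ?addNr !addr0.
by rewrite addrC [w * e + _]addrC addrK subrK.
Qed.
Lemma L2 (R : pzRingType) (e x w : R) : e * e = e -> x * e = x ->
  e * x * e * w = e -> (e * x + 1 - e) * (e * w + 1 - e) = 1.
Proof.
move=> ee xe h.
rewrite -!addrA !mulrDl !mulrDr !mulrN !mulNr !mulr1 !mul1r.
rewrite !mulrA h -(mulrA e x e) xe ee !subrr ?opprK ?addNr !addr0.
by rewrite addrC [e * w + _]addrC addrK subrK.
Qed.

Theorem mainTheorem10 (R : pzRingType) (a b c d y z bm cm : R) :
  is_bc_inverse a b c y ->   (* y = a^{||(b,c)} *)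
  is_bc_inverse d b c z ->   (* z = d^{||(b,c)} *)
  is_inner_inverse b bm -> is_inner_inverse c cm ->
  let e := b * bm in let f := cm * c in
  ((y * d * e + 1 - e) * (z * a * e + 1 - e) = 1 /\
   (z * a * e + 1 - e) * (y * d * e + 1 - e) = 1) /\
  ((f * d * y + 1 - f) * (f * a * z + 1 - f) = 1 /\
   (f * a * z + 1 - f) * (f * d * y + 1 - f) = 1).
Proof.
move=> [[r1 Hy1] [s1 Hy2] Hy3 Hy4] [[r2 Hz1] [s2 Hz2] Hz3 Hz4] Hb Hc e f.
have ee : e * e = e by rewrite /e mulrA Hb.
have ff : f * f = f by rewrite /f -mulrA (mulrA c cm c) Hc.
have eb : e * b = b by rewrite /e Hb.
have cf : c * f = c by rewrite /f mulrA Hc.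
have ey : e * y = y by rewrite Hy1 !mulrA eb.
have ez : e * z = z by rewrite Hz1 !mulrA eb.
have yf : y * f = y by rewrite Hy2 -!mulrA cf.
have zf : z * f = z by rewrite Hz2 -!mulrA cf.
have ydz : y * d * z = y by rewrite {1}Hy2 -!mulrA (mulrA c d z) Hz4 mulrA -Hy2.
have zay : z * a * y = z by rewrite {1}Hz2 -!mulrA (mulrA c a y) Hy4 mulrA -Hz2.
have yaz : y * a * z = z by rewrite {1}Hz1 !mulrA Hy3 -Hz1.
have zdy : z * d * y = y by rewrite {1}Hy1 !mulrA Hz3 -Hy1.
have yae : y * a * e = e by rewrite /e mulrA Hy3.
have zde : z * d * e = e by rewrite /e mulrA Hz3.
have fdz : f * d * z = f by rewrite /f -!mulrA (mulrA c d z) Hz4.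
have faz : f * a * y = f by rewrite /f -!mulrA (mulrA c a y) Hy4.
clearbody e f.
split; split.
- apply: L1 => //; first by rewrite mulrA ez.
  by rewrite !mulrA -(mulrA (y * d) e z) ez ydz yae.
- apply: L1 => //; first by rewrite mulrA ey.
  by rewrite !mulrA -(mulrA (z * a) e y) ey zay zde.
- rewrite -(mulrA f d y) -(mulrA f a z).
  apply: L2 => //; first by rewrite -mulrA yf.
  by rewrite !mulrA -(mulrA (f * d) y f) yf -(mulrA (f * d) y a) -(mulrA (f * d) (y * a) z) yaz fdz.
- rewrite -(mulrA f d y) -(mulrA f a z).
  apply: L2 => //; first by rewrite -mulrA zf.
  by rewrite !mulrA -(mulrA (f * a) z f) zf -(mulrA (f * a) z d) -(mulrA (f * a) (z * d) y) zdy faz.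
Qed.
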